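(* Let $Y$ be a real Banach lattice. The following conditions are equivalent: 1) $Y$ is uniformly monotone. 2) For every $0<\varepsilon<1$ there is $\eta(\varepsilon)>0$ such that whenever $u\in Y$, $v\in Y$ with $\Vert v\Vert=1$, $0\le u\le v$ and $\Vert v-u\Vert>1-\eta(\varepsilon)$, then $\Vert u\Vert\le\varepsilon$. 3) For every $0<\varepsilon<1$ there is $\eta(\varepsilon)>0$ such that whenever $u,v\in Y$ with $0\le u\le v$ and $\Vert v-u\Vert>(1-\eta(\varepsilon))\Vert v\Vert$, then $\Vert u\Vert\le\varepsilon\Vert v\Vert$. Moreover, if 2) holds with $\eta$, then $Y$ is uniformly monotone with $\delta(\varepsilon)=\eta(\varepsilon/2)$; and if $Y$ is uniformly monotone with $\delta(\varepsilon)$, then conditions 2) and 3) hold with $\eta(\varepsilon)=\frac{\delta(\varepsilon)}{1+\delta(\varepsilon)}$.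
   Context: A Banach lattice $E$ is uniformly monotone if for every $\varepsilon>0$ there is $\delta(\varepsilon)>0$ such that whenever $x\in E$ with $\Vert x\Vert=1$, $y\in E$, $x,y\ge0$, and $\Vert x+y\Vert\le 1+\delta(\varepsilon)$, then $\Vert y\Vert\le\varepsilon$; we then say $E$ is uniformly monotone with $\delta$. *)

(* Defs.v *)
From HB Require Import structures.
From mathcomp Require Import all_boot all_order all_algebra.
From mathcomp Require Import all_classical all_reals all_analysis.
Set Implicit Arguments. Unset Strict Implicit. Unset Printing Implicit Defensive.
Import Order.TTheory GRing.Theory Num.Theory.
Import numFieldNormedType.Exports.
Local Open Scope ring_scope.

Definition is_sup {T : Type} (le : T -> T -> Prop) (x y s : T) : Prop :=
  [/\ le x s, le y s & forall z, le x z -> le y z -> le s z].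

Definition vector_lattice_order {R : realType} {E : lmodType R}
  (le : E -> E -> Prop) : Prop :=
  [/\ (forall x, le x x),
      (forall x y, le x y -> le y x -> x = y) /\
      (forall x y z, le x y -> le y z -> le x z),
      (forall x y z, le x y -> le (x + z) (y + z)),
      (forall (a : R) x y, 0 <= a -> le x y -> le (a *: x) (a *: y)) &
      (forall x y, exists s, is_sup le x y s)].

Definition lattice_norm {R : realType} {E : normedModType R}
  (le : E -> E -> Prop) : Prop :=
  forall x y ax ay, is_sup le x (- x) ax -> is_sup le y (- y) ay ->
    le ax ay -> `|x| <= `|y|.

Definition banach_lattice {R : realType} {E : completeNormedModType R}
  (le : E -> E -> Prop) : Prop :=
  vector_lattice_order le /\ lattice_norm le.

Definition UM_at {R : realType} {E : normedModType R}
  (le : E -> E -> Prop) (eps d : R) : Prop :=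
  0 < d /\ forall x y : E, `|x| = 1 -> le 0 x -> le 0 y ->
    `|x + y| <= 1 + d -> `|y| <= eps.

Definition uniformly_monotone_with {R : realType} {E : normedModType R}
  (le : E -> E -> Prop) (delta : R -> R) : Prop :=
  forall eps : R, 0 < eps -> UM_at le eps (delta eps).

Definition uniformly_monotone {R : realType} {E : normedModType R}
  (le : E -> E -> Prop) : Prop :=
  exists delta : R -> R, uniformly_monotone_with le delta.

Definition cond2_with {R : realType} {E : normedModType R}
  (le : E -> E -> Prop) (eta : R -> R) : Prop :=
  forall eps : R, 0 < eps < 1 -> 0 < eta eps /\
    forall u v : E, `|v| = 1 -> le 0 u -> le u v ->
      `|v - u| > 1 - eta eps -> `|u| <= eps.

Definition cond2 {R : realType} {E : normedModType R}
  (le : E -> E -> Prop) : Prop :=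
  exists eta : R -> R, cond2_with le eta.

Definition cond3_with {R : realType} {E : normedModType R}
  (le : E -> E -> Prop) (eta : R -> R) : Prop :=
  forall eps : R, 0 < eps < 1 -> 0 < eta eps /\
    forall u v : E, le 0 u -> le u v ->
      `|v - u| > (1 - eta eps) * `|v| -> `|u| <= eps * `|v|.

Definition cond3 {R : realType} {E : normedModType R}
  (le : E -> E -> Prop) : Prop :=
  exists eta : R -> R, cond3_with le eta.

(* Main.v *)
Require Import Defs.
From HB Require Import structures.
From mathcomp Require Import all_boot all_order all_algebra.
From mathcomp Require Import all_classical all_reals all_analysis.
From mathcomp Require Import lra.
Import Order.TTheory GRing.Theory Num.Theory.
Import numFieldNormedType.Exports.
Local Open Scope ring_scope.

Set Implicit Arguments.
Unset Strict Implicit.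
Section Aux.
Variables (R : realType) (Y : completeNormedModType R) (le : Y -> Y -> Prop).
Hypothesis hY : banach_lattice le.

Lemma le_refl x : le x x.
Proof. by case: hY => -[]. Qed.

Lemma le_trans x y z : le x y -> le y z -> le x z.
Proof. by case: hY => -[_ [_ t]] _ _ _ _; apply: t. Qed.

Lemma le_add x y z : le x y -> le (x + z) (y + z).
Proof. by case: hY => -[_ _ t _ _] _; apply: t. Qed.

Lemma le_scale (a : R) x y : 0 <= a -> le x y -> le (a *: x) (a *: y).
Proof. by case: hY => -[_ _ _ t _] _; apply: t. Qed.

Lemma le_pos_scale (a : R) x : 0 <= a -> le 0 x -> le 0 (a *: x).
Proof. by move=> a0 h; have := le_scale a0 h; rewrite scaler0. Qed.

Lemma le_subpos u v : le u v -> le 0 (v - u).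
Proof. by move=> h; have := le_add (- u) h; rewrite subrr. Qed.

Lemma le_addr x y : le 0 y -> le x (x + y).
Proof. by move=> h; have := le_add x h; rewrite add0r addrC. Qed.

Lemma le_subr u v : le 0 u -> le (v - u) v.
Proof.
move=> h; have := le_addr (v - u) h; by rewrite subrK.
Qed.

Lemma abs_pos x : le 0 x -> is_sup le x (- x) x.
Proof.
move=> h; split; first exact: le_refl.
- have := le_add (- x) h; rewrite add0r subrr => h'.
  exact: le_trans h' h.
- by move=> z.
Qed.

Lemma mono u v : le 0 u -> le u v -> `|u| <= `|v|.
Proof.
move=> u0 uv; case: hY => _ ln.
apply: (ln u v u v (abs_pos u0) (abs_pos (le_trans u0 uv)) uv).
Qed.

Lemma cond2_3 eta : cond2_with le eta -> cond3_with le eta.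
Proof.
move=> H2 eps he; case: (H2 eps he) => ep Hc; split => // u v u0 uv h.
have nu := mono u0 uv.
have [v0|vn0] := eqVneq `|v| 0.
  by rewrite v0 mulr0; rewrite v0 in nu.
have Npos : 0 < `|v| by rewrite lt_def vn0 normr_ge0.
set N := `|v| in Npos nu h vn0 *.
set iN := N^-1.
have iNp : 0 < iN by rewrite invr_gt0.
have NiN : N * iN = 1 by rewrite mulfV.
have := Hc (iN *: u) (iN *: v).
rewrite !normrZ (gtr0_norm iNp) -scalerBr normrZ (gtr0_norm iNp) -/N.
move=> /(_ _ (le_pos_scale (ltW iNp) u0) (le_scale (ltW iNp) uv)).
have e0 : 0 < eps by case/andP: he.
have nvu := normr_ge0 (v - u); have nu0 := normr_ge0 u.
move=> H; have {}H := H ltac:(by rewrite mulrC NiN) ltac:(nra).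
nra.
Qed.

Lemma cond3_2 eta : cond3_with le eta -> cond2_with le eta.
Proof.
move=> H3 eps he; case: (H3 eps he) => ep Hc; split => // u v nv u0 uv h.
by have := Hc u v u0 uv; rewrite nv !mulr1; apply.
Qed.

Lemma partA eta : cond2_with le eta ->
  forall eps : R, 0 < eps < 2 -> UM_at le eps (eta (eps / 2)).
Proof.
move=> H2 eps /andP[e0 e2].
have he : 0 < eps / 2 < 1 by apply/andP; split; lra.
case: (H2 _ he) => dpos Hc; split => // x y nx x0 y0 hxy.
set d := eta (eps / 2) in dpos Hc hxy *.
have xxy := le_addr x y0.
have n1 : 1 <= `|x + y| by rewrite -nx; apply: mono.
set N := `|x + y| in n1 hxy *.
have Npos : 0 < N by lra.
set iN := N^-1.
have iNp : 0 < iN by rewrite invr_gt0.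
have NiN : N * iN = 1 by rewrite mulfV // gt_eqF.
have v0 : le 0 (iN *: (x + y)) by apply: le_pos_scale; [exact: ltW | exact: le_trans xxy].
have nv : `|iN *: (x + y)| = 1 by rewrite normrZ (gtr0_norm iNp) -/N mulrC.
have [hd|hd] := ltrP 1 d.
  have := Hc _ _ nv v0 (le_refl _); rewrite subrr normr0 nv => H.
  have := H ltac:(lra); lra.
have yxy : le y (x + y) by rewrite addrC; apply: le_addr.
have := Hc (iN *: y) (iN *: (x + y)) nv (le_pos_scale (ltW iNp) y0)
   (le_scale (ltW iNp) yxy).
rewrite -scalerBr addrC addrK !normrZ (gtr0_norm iNp) nx mulr1.
have ny := normr_ge0 y.
move=> H; have {}H := H ltac:(nra).
nra.
Qed.

Lemma partB delta : uniformly_monotone_with le delta ->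
  cond2_with le (fun eps => delta eps / (1 + delta eps)).
Proof.
move=> HU eps /andP[e0 e1]; case: (HU eps e0) => dpos Hd.
set d := delta eps in dpos Hd *.
set id := (1 + d)^-1.
have idp : 0 < id by rewrite invr_gt0; lra.
have did : (1 + d) * id = 1 by rewrite mulfV //; apply: lt0r_neq0; lra.
split; first by rewrite divr_gt0 //; lra.
move=> u v nv u0 uv hvu.
have w0 := le_subpos uv.
set W := `|v - u| in hvu.
have Wp : 0 < W by nra.
set iW := W^-1.
have iWp : 0 < iW by rewrite invr_gt0.
have WiW : W * iW = 1 by rewrite mulfV // gt_eqF.
have WV : W <= 1 by rewrite -nv; apply: mono => //; apply: le_subr.
have := Hd (iW *: (v - u)) (iW *: u).
rewrite -scalerDr subrK !normrZ (gtr0_norm iWp) nv -/W mulr1.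
move=> /(_ ltac:(by rewrite mulrC WiW) (le_pos_scale (ltW iWp) w0)
   (le_pos_scale (ltW iWp) u0)).
have nu := normr_ge0 u.
move=> H; have {}H := H ltac:(nra).
nra.
Qed.

Lemma UM_at_mono e1 e2 d : e1 <= e2 -> UM_at le e1 d -> UM_at le e2 d.
Proof.
move=> e12 [d0 H]; split => // x y nx x0 y0 h.
exact: Order.POrderTheory.le_trans (H x y nx x0 y0 h) e12.
Qed.

Lemma c2_UM : cond2 le -> uniformly_monotone le.
Proof.
case=> eta H2; exists (fun e => eta (Num.min e 1 / 2)) => e e0.
apply: (UM_at_mono (e1 := Num.min e 1)); first by rewrite ge_min lexx.
apply: partA => //; apply/andP; split.
  by rewrite lt_min e0 ltr01.
have : Num.min e 1 <= 1 by rewrite ge_min lexx orbT.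
move=> h; apply: (Order.POrderTheory.le_lt_trans h); by rewrite ltr1n.
Qed.

End Aux.
Unset Implicit Arguments.

Theorem proposition4p2 (R : realType) (Y : completeNormedModType R)
  (le : Y -> Y -> Prop) (hY : banach_lattice le) :
  [/\ (uniformly_monotone le <-> cond2 le),
      (uniformly_monotone le <-> cond3 le),
      (forall eta : R -> R, cond2_with le eta ->
         forall eps : R, 0 < eps < 2 -> UM_at le eps (eta (eps / 2))) &
      (forall delta : R -> R, uniformly_monotone_with le delta ->
         cond2_with le (fun eps => delta eps / (1 + delta eps)) /\
         cond3_with le (fun eps => delta eps / (1 + delta eps)))].
Proof.
have UM2 : uniformly_monotone le -> cond2 le.
  by case=> delta HU; exists (fun eps => delta eps / (1 + delta eps)); apply: partB.
split.
- split; [exact: UM2 | exact: c2_UM].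
- split.
    by move/UM2 => [eta H]; exists eta; apply: cond2_3.
  by case=> eta H; apply: c2_UM => //; exists eta; apply: cond3_2.
- exact: partA.
- move=> delta HU; split; first exact: partB.
  by apply: cond2_3 => //; apply: partB.
Qed.
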